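(* Consider a SOCO problem with norm $\|\cdot\|$, let $\theta\ge1$ and $N(\cdot)=\theta\|\cdot\|$. Then the expected operating cost of RBG($N$) satisfies $\mathbb{E}[OC(RBG(N))]\le OPT_N$.
   Context: The decision space $F\subseteq(\mathbb{R}^+)^n$ is convex and compact, $\|\cdot\|$ is a norm on $\mathbb{R}^n$, and the cost functions $c^t:F\to\mathbb{R}^+$ are convex with uniformly bounded subgradients. Algorithm RBG($N$): define $w^0(x)=N(x)$ and $w^t(x)=\min_{y\in F}\{w^{t-1}(y)+c^t(y)+N(x-y)\}$; draw $r$ uniformly at random from $(-1,1)$ once; at each time $t$ choose $x^t\in F$ minimizing $Y^t(x)=w^{t-1}(x)+rN(x)$ (so $x^{t+1}$ is chosen after seeing $c^t$). Operating cost: $OC(RBG(N))=\sum_{t=1}^Tc^t(x^{t+1})$. $OPT_N=\min_{(x^1,\dots,x^T)\in F^T}\sum_{t=1}^Tc^t(x^t)+N(x^t-x^{t-1})$ with $x^0=0$. The expectation is over $r$. *)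

(* Defs.v *)
From HB Require Import structures.
From mathcomp Require Import all_boot all_order all_algebra.
From mathcomp Require Import all_classical all_reals all_analysis.
Set Implicit Arguments. Unset Strict Implicit. Unset Printing Implicit Defensive.
Import Order.TTheory GRing.Theory Num.Theory.
Import numFieldNormedType.Exports.
Local Open Scope classical_set_scope.
Local Open Scope ring_scope.

Definition is_norm (R : realType) (n : nat) (nrm : 'rV[R]_n -> R) : Prop :=
  [/\ (forall x, 0 <= nrm x),
      (forall x, nrm x = 0 -> x = 0),
      (forall (a : R) x, nrm (a *: x) = `|a| * nrm x) &
      (forall x y, nrm (x + y) <= nrm x + nrm y)].

Definition convex_on (R : realType) (n : nat) (F : set 'rV[R]_n)
    (f : 'rV[R]_n -> R) : Prop :=
  forall x y (l : R), F x -> F y -> 0 <= l <= 1 ->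
    f (l *: x + (1 - l) *: y) <= l * f x + (1 - l) * f y.

Definition dotv (R : realType) (n : nat) (g v : 'rV[R]_n) : R :=
  \sum_(i < n) g 0 i * v 0 i.

Definition subgradient (R : realType) (n : nat) (F : set 'rV[R]_n)
    (f : 'rV[R]_n -> R) (x g : 'rV[R]_n) : Prop :=
  forall y, F y -> f x + dotv g (y - x) <= f y.

Fixpoint work (R : realType) (n : nat) (F : set 'rV[R]_n)
    (N : 'rV[R]_n -> R) (c : nat -> 'rV[R]_n -> R) (t : nat) (x : 'rV[R]_n) : R :=
  match t with
  | 0 => N x
  | t'.+1 => inf [set work F N c t' y + c t y + N (x - y) | y in F]
  end.

Definition rbg_OC (R : realType) (n : nat) (c : nat -> 'rV[R]_n -> R)
    (T : nat) (X : R -> nat -> 'rV[R]_n) (r : R) : R :=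
  \sum_(1 <= t < T.+1) c t (X r t.+1).

(* Total cost (operating + switching with N) of a schedule y with y 0 = 0. *)
Definition sched_cost (R : realType) (n : nat) (c : nat -> 'rV[R]_n -> R)
    (N : 'rV[R]_n -> R) (T : nat) (y : nat -> 'rV[R]_n) : R :=
  \sum_(1 <= t < T.+1) (c t (y t) + N (y t - y t.-1)).

Definition open_m1_1 (R : realType) : set R := `](-1 : R), 1[%classic.

(* Main.v *)
Require Import Defs.
From HB Require Import structures.
From mathcomp Require Import all_boot all_order all_algebra.
From mathcomp Require Import all_classical all_reals all_analysis.
From mathcomp Require Import ring lra.
From mathcomp Require Import measurable_realfun.
Import Order.TTheory GRing.Theory Num.Theory.
Import numFieldNormedType.Exports.
Local Open Scope classical_set_scope.
Local Open Scope ring_scope.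

Lemma int_affine (R : realType) (S b : R) :
  (\int[@lebesgue_measure R]_(r in @open_m1_1 R) ((S + r * b)%:E) = (2 * S)%:E)%E.
Proof.
have E (u v : R) : u *: v = u * v by [].
pose F (x : R) := S * x + b * (x ^+ 2 / 2).
have dF (x : R) : is_derive x (1:R) F (S + x * b).
  apply: is_derive_eq.
  rewrite !scaler0 add0r !E !mulr1.
  by rewrite -mulr2n; field.
pose f (x : R) := S + x * b.
have df (x : R) : is_derive x (1:R) f b.
  apply: is_derive_eq.
  by rewrite !(add0r, scaler0, add0r, mul1r, addr0); rewrite [_ *: _]E mulr1.
have cF (x : R) : {for x, continuous F}.
  apply/differentiable_continuous; rewrite -derivable1_diffP.
  exact: ex_derive.
rewrite /open_m1_1 -(@integral_itv_bndoo _ _ _ _ true false); last first.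
  apply/measurable_realfun.measurable_EFinP.
  apply: measurable_realfun.open_continuous_measurable_fun; first exact: interval_open.
  move=> x _; apply/differentiable_continuous; rewrite -derivable1_diffP.
  exact: ex_derive.
rewrite (@continuous_FTC2 _ _ F) //.
- by rewrite /F; congr (_%:E); rewrite sqrrN expr1n; field.
-
  apply: continuous_in_subspaceT => x _; apply/differentiable_continuous; rewrite -derivable1_diffP.
  exact: ex_derive.
- split.
  + by move=> x _; exact: ex_derive.
  + exact/cvg_at_right_filter/cF.
  + exact/cvg_at_left_filter/cF.
- by move=> x _; rewrite derive1E derive_val.
Qed.

Lemma affine_meas (R : realType) (S b : R) :
  measurable_fun (@open_m1_1 R) (fun r : R => ((S + r * b)%:E : \bar R)).
Proof.
pose f (x : R) := S + x * b.
have df (x : R) : is_derive x (1:R) f b.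
  apply: is_derive_eq.
  by rewrite !(add0r, scaler0, add0r, mul1r, addr0); rewrite [_ *: _]mulr1.
apply/measurable_realfun.measurable_EFinP.
apply: measurable_realfun.open_continuous_measurable_fun; first exact: interval_open.
move=> x _; apply/differentiable_continuous; rewrite -derivable1_diffP.
exact: ex_derive.
Qed.

Section NormEq.
Variables (R : realType) (n : nat) (nrm : 'rV[R]_n -> R).
Hypothesis hn : is_norm nrm.

Lemma coord_le (v : 'rV[R]_n) i : `|v 0 i| <= `|v|.
Proof.
rewrite [leRHS]/Num.Def.normr/= mx_normrE.
apply: le_trans; last exact: (le_bigmax _ _ (0, i)).
by [].
Qed.

Lemma nrm0 : nrm 0 = 0.
Proof. by case: hn => _ _ hZ _; rewrite -(scale0r (0:'rV[R]_n)) hZ normr0 mul0r. Qed.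

Lemma nrmN v : nrm (- v) = nrm v.
Proof. by case: hn => _ _ hZ _; rewrite -scaleN1r hZ normrN1 mul1r. Qed.

Lemma nrm_sum (I : Type) (s : seq I) (f : I -> 'rV[R]_n) :
  nrm (\sum_(i <- s) f i) <= \sum_(i <- s) nrm (f i).
Proof.
case: hn => _ _ _ hD.
elim/big_rec2: _ => [|i y1 y2 _ IH]; first by rewrite nrm0.
exact: le_trans (hD _ _) (lerD (lexx _) IH).
Qed.

Lemma nrm_ub v : nrm v <= (\sum_i nrm (delta_mx 0 i)) * `|v|.
Proof.
case: hn => _ _ hZ _.
rewrite {1}(row_sum_delta v); apply: le_trans; first exact: nrm_sum.
rewrite mulr_suml; apply: ler_sum => i _; rewrite hZ mulrC.
apply: ler_wpM2l; first by case: hn.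
exact: coord_le.
Qed.

Lemma nrm_lip x y : `|nrm x - nrm y| <= nrm (x - y).
Proof.
case: hn => _ _ _ hD.
have h1 := hD (x - y) y; rewrite subrK in h1.
have h2 := hD (y - x) x; rewrite subrK -opprB nrmN in h2.
rewrite ler_norml; apply/andP; split; lra.
Qed.

Lemma nrm_cont : continuous nrm.
Proof.
move=> x; have FF : ProperFilter (nbhs x) by exact: nbhs_pfilter.
apply/cvgrPdist_le => e e0.
set K := \sum_i nrm (delta_mx (0:'I_1) i).
have K0 : 0 <= K by apply: sumr_ge0 => i _; case: hn.
have K1 : 0 < K + 1 by rewrite ltr_wpDl.
have d0 : 0 < e / (K + 1) by rewrite divr_gt0.
near=> z.
apply: le_trans (nrm_lip _ _) _.
apply: le_trans (nrm_ub _) _.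
rewrite -/K.
have h : `|x - z| <= e / (K + 1).
  near: z. exact: (@cvgr_dist_le _ _ _ (nbhs (x : 'rV[R]_n)) _ id x cvg_id _ d0).
rewrite ler_pdivlMr // in h.
have := normr_ge0 (x - z); nra.
Unshelve. all: by end_near. Qed.
Lemma nrm_lb : exists k : R, 0 < k /\ forall v, `|v| <= k * nrm v.
Proof.
have [hn0 hdef hZ hD] := hn.
have [[w w0]|nw] := pselect (exists v : 'rV[R]_n, v != 0); last first.
  exists 1; split => // v.
  have -> : v = 0 by apply: contra_notP nw => /eqP vn0; exists v.
  by rewrite normr0 mul1r.
pose S := [set v : 'rV[R]_n | `|v| = 1].
have nz v : v != 0 -> S (`|v|^-1 *: v).
  move=> v0; rewrite /S /= normrZ normfV normr_id mulVf //.
  by rewrite normr_eq0.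
have S0 : S !=set0 by exists (`|w|^-1 *: w); exact: nz.
have cS : compact S.
  apply: bounded_closed_compact.
    exists 1; split => // M M1 v /= ->; exact: ltW.
  have -> : S = (fun v : 'rV[R]_n => `|v|) @^-1` [set 1] by [].
  apply: preimage_closed; last exact: closed_eq.
  move=> v _; exact: norm_continuous.
have [c /set_mem Sc cmin] := EVT_min_rV S0 cS (continuous_in_subspaceT (fun x _ => nrm_cont x)).
have c0 : 0 < nrm c.
  rewrite lt_neqAle hn0 andbT eq_sym; apply/negP => /eqP /hdef c0.
  by move: Sc; rewrite /S /= c0 normr0 => /eqP; rewrite eq_sym oner_eq0.
exists (nrm c)^-1; split; first by rewrite invr_gt0.
move=> v; have [->|v0] := eqVneq v 0; first by rewrite normr0 nrm0 mulr0.
have := cmin _ (mem_set (nz _ v0)); rewrite hZ normfV normr_id.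
rewrite ler_pdivlMl ?normr_gt0 // => h.
by rewrite ler_pdivlMl // mulrC.
Qed.
End NormEq.

Section Work.
Variables (R : realType) (n : nat) (F : set 'rV[R]_n) (N : 'rV[R]_n -> R)
  (c : nat -> 'rV[R]_n -> R).
Hypotheses (F0 : exists x0, F x0) (N0 : forall v, 0 <= N v) (Nz : N 0 = 0)
  (NN : forall v, N (- v) = N v) (ND : forall u v, N (u + v) <= N u + N v)
  (c0 : forall t x, F x -> 0 <= c t x).

Let W := work F N c.

Lemma E_ne t x : [set W t y + c t.+1 y + N (x - y) | y in F] !=set0.
Proof. by case: F0 => y Fy; exists (W t y + c t.+1 y + N (x - y)), y. Qed.

Lemma W_ge0 t x : 0 <= W t x.
Proof.
elim: t x => [|t IH] x /=; first exact: N0.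
apply: lb_le_inf; first exact: E_ne.
move=> _ [y Fy <-]; rewrite -/W.
by apply: addr_ge0; [apply: addr_ge0; [exact: IH|exact: c0]|exact: N0].
Qed.

Lemma E_inf t x : has_inf [set W t y + c t.+1 y + N (x - y) | y in F].
Proof.
split; first exact: E_ne.
exists 0 => _ [y Fy <-].
by apply: addr_ge0; [apply: addr_ge0; [exact: W_ge0|exact: c0]|exact: N0].
Qed.

Lemma W_le t x y : F y -> W t.+1 x <= W t y + c t.+1 y + N (x - y).
Proof. by move=> Fy; apply: (ge_inf (E_inf t x).2); exists y. Qed.

Lemma W_adh t x (e : R) : 0 < e ->
  exists2 y, F y & W t y + c t.+1 y + N (x - y) < W t.+1 x + e.
Proof.
move=> e0; have [_ [y Fy <-] h] := inf_adherent e0 (E_inf t x).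
by exists y.
Qed.

Lemma N_tri x y : N x <= N y + N (x - y).
Proof. by apply: le_trans (ND _ _); rewrite addrC subrK. Qed.

Lemma W_lip t x y : W t x <= W t y + N (x - y).
Proof.
case: t => [|t]; first exact: N_tri.
rewrite -lerBlDr; apply: lb_le_inf; first exact: E_ne.
move=> _ [z Fz <-]; rewrite lerBlDr.
change (W t.+1 x <= W t z + c t.+1 z + N (y - z) + N (x - y)).
apply: le_trans (W_le _ _ _ Fz) _.
have := N_tri (x - z) (y - z); rewrite opprB addrA subrK => h.
rewrite -/W; lra.
Qed.

Lemma W_step t x : F x -> W t.+1 x <= W t x + c t.+1 x.
Proof. by move=> Fx; apply: le_trans (W_le _ _ _ Fx) _; rewrite subrr Nz addr0. Qed.

Lemma key t x (r L : R) : -1 < r < 1 -> 0 <= L ->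
  (forall x y, F x -> F y -> c t.+1 x <= c t.+1 y + L * N (x - y)) ->
  F x -> (forall y, F y -> W t.+1 x + r * N x <= W t.+1 y + r * N y) ->
  c t.+1 x <= W t.+1 x - W t x.
Proof.
move=> /andP[r1 r2] L0 cL Fx xmin.
set a := `|r|.
have a1 : a < 1 by rewrite /a ltr_norml r1 r2.
have a0 : 0 <= a := normr_ge0 r.
set M := 1 + L / (1 - a).
have M0 : 0 < M by rewrite ltr_wpDr // divr_ge0 // subr_ge0 ltW.
rewrite lerBrDr; apply/ler_addgt0Pr => e e0.
have ee0 : 0 < e / M by rewrite divr_gt0.
have [y Fy hy] := @W_adh t x (e / M) ee0.
have h1 := xmin _ Fy.
have h2 := W_step t _ Fy.
have h3 : r * N y <= r * N x + a * N (x - y).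
  have hy1 := N_tri y x; have hx1 := N_tri x y.
  rewrite -opprB NN in hy1.
  have : r * (N y - N x) <= a * N (x - y).
    apply: le_trans (ler_norm _) _; rewrite normrM.
    apply: ler_wpM2l => //; rewrite ler_norml; apply/andP; split; lra.
  lra.
have h4 := W_lip t x y.
have h5 := cL _ _ Fx Fy.
have hd : N (x - y) <= (e / M) / (1 - a).
  rewrite ler_pdivlMr ?subr_gt0 //.
  have : a * N (x - y) <= N (x - y) by rewrite ler_piMl // ltW.
  rewrite mulrBr mulr1. rewrite -/W in hy h1 h2 h4 h5 *. lra.
have hL : L * N (x - y) <= L * ((e / M) / (1 - a)) by apply: ler_wpM2l.
have hM : e / M + L * ((e / M) / (1 - a)) = e.
  rewrite /M; field.
  by rewrite !gt_eqF //; lra.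
rewrite -/W in hy h1 h2 h4 h5 *.
lra.
Qed.

Lemma W_sched (T : nat) (y : nat -> 'rV[R]_n) : y 0%N = 0 ->
  (forall t, (1 <= t <= T)%N -> F (y t)) ->
  W T (y T) <= sched_cost c N T y.
Proof.
move=> y0 Fy.
suff h : forall t, (t <= T)%N ->
    W t (y t) <= \sum_(1 <= s < t.+1) (c s (y s) + N (y s - y s.-1)) by exact: h.
elim=> [|t IH] tT.
  by rewrite big_geq // /W /= y0 Nz.
rewrite big_nat_recr //=.
have Ft : F (y t.+1) by apply: Fy; rewrite tT.
have := W_step t _ Ft; have := W_lip t (y t.+1) (y t); have := IH (ltnW tT).
rewrite -/W; lra.
Qed.

Lemma OC_bound (T : nat) (X : nat -> 'rV[R]_n) (r L : R) : -1 < r < 1 -> 0 <= L ->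
  (forall t x y, F x -> F y -> c t.+1 x <= c t.+1 y + L * N (x - y)) ->
  (forall t, (1 <= t <= T.+1)%N -> F (X t) /\
     forall y, F y -> W t.-1 (X t) + r * N (X t) <= W t.-1 y + r * N y) ->
  forall k, (k <= T)%N -> \sum_(1 <= t < k.+1) c t (X t.+1) <=
     (W k (X k.+1) + r * N (X k.+1)) - (W 0 (X 1) + r * N (X 1)).
Proof.
move=> hr L0 cL hX; elim=> [|k IH] kT.
  by rewrite big_geq // subrr.
rewrite big_nat_recr //=.
have [F2 min2] := hX k.+2 kT.
have [F1 min1] := hX k.+1 (ltnW kT).
have hk := @key k (X k.+2) r L hr L0 (cL k) F2 min2.
have hm := min1 _ F2.
have := IH (ltnW kT).
rewrite -/W /= in hm hk *; lra.
Qed.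

Lemma pointwise (T : nat) (X : nat -> 'rV[R]_n) (y : nat -> 'rV[R]_n) (r L : R) :
  -1 < r < 1 -> 0 <= L ->
  (forall t x y, F x -> F y -> c t.+1 x <= c t.+1 y + L * N (x - y)) ->
  (forall t, (1 <= t <= T.+1)%N -> F (X t) /\
     forall y, F y -> W t.-1 (X t) + r * N (X t) <= W t.-1 y + r * N y) ->
  y 0%N = 0 -> (forall t, (1 <= t <= T)%N -> F (y t)) ->
  \sum_(1 <= t < T.+1) c t (X t.+1) <=
    sched_cost c N T y + r * (if T is 0 then 0 else N (y T)).
Proof.
move=> hr L0 cL hX y0 Fy.
have h := @OC_bound T X r L hr L0 cL hX T (leqnn T).
have [F1 _] := hX 1%N isT.
have h0 : 0 <= W 0 (X 1%N) + r * N (X 1%N).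
  rewrite /W /=; have := N0 (X 1%N); move: hr => /andP[r1 r2]; nra.
case: T hX Fy h => [|T] hX Fy h.
  apply: le_trans h _; rewrite /sched_cost big_geq // mulr0 addr0; lra.
have [_ minT] := hX T.+2 (leqnn _).
have FyT : F (y T.+1) by apply: Fy; rewrite leqnn.
have h1 := minT _ FyT.
have h2 := @W_sched T.+1 y y0 Fy.
rewrite /= in h1; lra.
Qed.

End Work.

Lemma c_lip (R : realType) (n : nat) (F : set 'rV[R]_n) (nrm : 'rV[R]_n -> R)
    (theta : R) (c : nat -> 'rV[R]_n -> R) :
  is_norm nrm -> 0 < theta ->
  (exists G : R, forall t x, F x ->
     exists g, subgradient F (c t) x g /\ forall i, `|g 0 i| <= G) ->
  exists L, 0 <= L /\ forall t x y, F x -> F y ->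
    c t x <= c t y + L * (theta * nrm (x - y)).
Proof.
move=> hn th [G hG]; have [k [k0 hk]] := @nrm_lb _ _ _ hn.
have G0 : 0 <= Num.max G 0 by rewrite le_max lexx orbT.
exists ((n%:R * Num.max G 0 * k) / theta); split.
  by rewrite divr_ge0 ?mulr_ge0 // ltW.
move=> t x y Fx Fy; have [g [sg gb]] := hG t x Fx.
have hs := sg y Fy.
have hd : `|dotv g (y - x)| <= n%:R * Num.max G 0 * `|x - y|.
  rewrite /dotv; apply: le_trans (ler_norm_sum _ _ _) _.
  apply: le_trans (_ : \sum_(i < n) Num.max G 0 * `|x - y| <= _).
    apply: ler_sum => i _; rewrite normrM; apply: ler_pM => //.
      by apply: le_trans (gb i) _; rewrite le_max lexx.
    by rewrite distrC; exact: coord_le.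
  by rewrite sumr_const card_ord -mulrA mulr_natl.
have e2 : n%:R * Num.max G 0 * `|x - y| <= n%:R * Num.max G 0 * (k * nrm (x - y)).
  by apply: ler_wpM2l; [rewrite mulr_ge0 | exact: hk].
have e3 := ler_norm (- dotv g (y - x)); rewrite normrN in e3.
apply: le_trans (_ : c t y + n%:R * Num.max G 0 * (k * nrm (x - y)) <= _).
  lra.
rewrite lerD2l le_eqVlt; apply/orP; left; apply/eqP; field; by rewrite gt_eqF.
Qed.

Theorem lemma4 (R : realType) (n : nat) (F : set 'rV[R]_n)
    (nrm : 'rV[R]_n -> R) (theta : R) (T : nat)
    (c : nat -> 'rV[R]_n -> R) (X : R -> nat -> 'rV[R]_n) :
  (* decision space: convex, compact, in the nonnegative orthant *)
  convex_set F -> compact F -> (forall x, F x -> forall i, 0 <= x 0 i) ->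
  (* the norm and N = theta * norm with theta >= 1 *)
  is_norm nrm -> 1 <= theta ->
  (* cost functions: nonnegative, convex, uniformly bounded subgradients *)
  (forall t x, F x -> 0 <= c t x) ->
  (forall t, convex_on F (c t)) ->
  (exists G : R, forall t x, F x ->
     exists g, subgradient F (c t) x g /\ forall i, `|g 0 i| <= G) ->
  (* RBG(N): for each r in (-1,1), X r t is in F and minimizes
     Y^t(x) = w^{t-1}(x) + r N(x), for t = 1, ..., T+1 *)
  (forall r, -1 < r < 1 -> forall t, (1 <= t <= T.+1)%N ->
     F (X r t) /\
     forall y, F y ->
       work F (fun v => theta * nrm v) c t.-1 (X r t) + r * (theta * nrm (X r t))
       <= work F (fun v => theta * nrm v) c t.-1 y + r * (theta * nrm y)) ->
  (* the operating cost is a measurable function of r (so that E is defined) *)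
  measurable_fun ((@open_m1_1 R)) (rbg_OC c T X) ->
  (* E[OC(RBG(N))] <= OPT_N, i.e. <= the cost of every schedule in F^T *)
  forall y : nat -> 'rV[R]_n, y 0%N = 0 -> (forall t, (1 <= t <= T)%N -> F (y t)) ->
    (((2:R)^-1)%:E * \int[lebesgue_measure]_(r in (@open_m1_1 R)) (rbg_OC c T X r)%:E
      <= (sched_cost c (fun v => theta * nrm v) T y)%:E)%E.
Proof.
move=> _ _ _ hn th1 c0 _ hG hX hmeas y y0 Fy.
have th0 : 0 < theta by apply: lt_le_trans th1.
set N := fun v => theta * nrm v.
have [hn0 hdef hZ hD] := hn.
have N0 v : 0 <= N v by rewrite /N mulr_ge0 // ltW.
have Nz : N 0 = 0 by rewrite /N (@nrm0 _ _ _ hn) mulr0.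
have NN v : N (- v) = N v by rewrite /N (@nrmN _ _ _ hn).
have ND u v : N (u + v) <= N u + N v by rewrite /N -mulrDr ler_wpM2l // ltW.
have F0 : exists x0, F x0.
  have r0 : (-1 : R) < 0 < (1:R) by apply/andP; split; lra.
  by have [F1 _] := hX 0 r0 1%N isT; exists (X 0 1%N).
have [L [L0 cL]] := @c_lip _ _ _ _ _ _ hn th0 hG.
set S := sched_cost c N T y.
set b := if T is 0 then 0 else N (y T).
have hpt r : open_m1_1 r -> rbg_OC c T X r <= S + r * b.
  rewrite /open_m1_1 /= in_itv /= => hr.
  apply: (@pointwise R n F N c F0 N0 Nz NN ND c0 T (X r) y r L hr L0) => //.
  by move=> t x z Fx Fz; exact: cL.
  exact: hX.
have hI : (\int[lebesgue_measure]_(r in @open_m1_1 R) (rbg_OC c T X r)%:E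
    <= (2 * S)%:E)%E.
  rewrite -(@int_affine R S b).
  apply: ge0_le_integral.
  - exact: measurable_itv.
  - move=> r hr; rewrite lee_fin /rbg_OC big_nat_cond; apply: sumr_ge0 => t /andP[/andP[t1 tT] _].
    move: hr; rewrite /open_m1_1 /= in_itv /= => hr.
    apply: c0; have [] := hX r hr t.+1; first by rewrite /= ltnS.
    by [].
  - exact/measurable_realfun.measurable_EFinP.
  - exact: affine_meas.
  - by move=> r hr; rewrite lee_fin; exact: hpt.
have h2 : (0 < (2:R)^-1%:E)%E by rewrite lte_fin invr_gt0.
rewrite -(lee_pmul2l _ h2) // in hI.
apply: le_trans hI _.
by rewrite -EFinM lee_fin mulrA mulVf // mul1r.
Qed.
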